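(* Let $\mathbf{L}$ be a Euclidean modal logic and let $\mathcal{F}^{\rho}_{A,B}$ be a galaxy in $\mathcal{K}_2$. If $\{2\}\times\mathbf{N}^{-}\subseteq\mathtt{S}_{\mathbf{L}}$, then $\mathbf{L}$ is valid in $\mathcal{F}^{\rho}_{A,B}$.
   Context: A frame is a pair $(W,R)$ with $W$ non-empty and $R\subseteq W\times W$. Modal formulas (propositional variables, $\bot,\neg,\vee,\Box$) have standard Kripke semantics; validity means truth at all points under all valuations. A (normal) modal logic contains all tautologies and K axioms and is closed under uniform substitution, modus ponens and necessitation; a Euclidean modal logic is one not containing $\bot$ and containing $\Diamond\psi\to\Box\Diamond\psi$ for all $\psi$. For sets $A,B$ with $A\cap B=\emptyset$, $A\cup B\ne\emptyset$ and $\rho:A\to\wp(B)$, the galaxy $\mathcal{F}^{\rho}_{A,B}$ has universe $A\cup B$ and relation $\bigcup_{s\in A}(\{s\}\times\rho(s))\cup(B\times B)$. $\mathcal{K}_2$ is the class of galaxies with $|A|\ge4$, $|B|\ge4$ and $|\rho(s)|=2$ for all $s\in A$. $\mathbf{N}^{+}=\{1,2,\dots\}$, $\mathbf{N}^{-}=\{-1,0,1,\dots\}$. For $m\in\mathbf{N}^{+}$, $n\ge0$, the flower $\mathcal{F}_m^n$ has universe $\{0,\dots,m+n\}$ and relation $(\{0\}\times\{1,\dots,m\})\cup\{1,\dots,m+n\}^2$; $\mathcal{F}_m^{-1}$ has universe $\{1,\dots,m\}$ and relation $\{1,\dots,m\}^2$. $\mathtt{S}_{\mathbf{L}}=\{(m,n)\in\mathbf{N}^{+}\times\mathbf{N}^{-}:\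 \mathbf{L}\text{ valid in }\mathcal{F}_m^n\}$. *)

(* Defs.v *)
From Stdlib Require Import ZArith Bool.

Inductive form : Type :=
| Var : nat -> form
| Bot : form
| Neg : form -> form
| Or  : form -> form -> form
| Box : form -> form.

Definition Imp (a b : form) : form := Or (Neg a) b.
Definition Dia (a : form) : form := Neg (Box (Neg a)).

Record frame := Frame { fW : Type; fR : fW -> fW -> Prop }.

Fixpoint sat (F : frame) (V : nat -> fW F -> Prop) (w : fW F) (a : form) : Prop :=
  match a with
  | Var p => V p w
  | Bot => False
  | Neg b => ~ sat F V w b
  | Or b c => sat F V w b \/ sat F V w c
  | Box b => forall u, fR F w u -> sat F V u b
  end.

Definition valid_in (F : frame) (a : form) : Prop :=
  forall (V : nat -> fW F -> Prop) (w : fW F), sat F V w a.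

Definition logic := form -> Prop.

Definition logic_valid_in (L : logic) (F : frame) : Prop :=
  forall a, L a -> valid_in F a.

(** Propositional tautologies: formulas true under every boolean assignment
    to their maximal non-propositional subformulas (variables and boxed formulas). *)
Fixpoint peval (v : form -> bool) (a : form) : bool :=
  match a with
  | Var p => v (Var p)
  | Bot => false
  | Neg b => negb (peval v b)
  | Or b c => peval v b || peval v c
  | Box b => v (Box b)
  end.

Definition tautology (a : form) : Prop := forall v, peval v a = true.

Fixpoint subst (s : nat -> form) (a : form) : form :=
  match a with
  | Var p => s p
  | Bot => Bot
  | Neg b => Neg (subst s b)
  | Or b c => Or (subst s b) (subst s c)
  | Box b => Box (subst s b)
  end.

Definition K_axiom : form :=
  Imp (Box (Imp (Var 0) (Var 1))) (Imp (Box (Var 0)) (Box (Var 1))).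

Definition normal_modal_logic (L : logic) : Prop :=
  (forall a, tautology a -> L a) /\
  L K_axiom /\
  (forall s a, L a -> L (subst s a)) /\
  (forall a b, L a -> L (Imp a b) -> L b) /\
  (forall a, L a -> L (Box a)).

Definition euclidean_logic (L : logic) : Prop :=
  normal_modal_logic L /\ ~ L Bot /\
  (forall psi, L (Imp (Dia psi) (Box (Dia psi)))).

Definition galaxy_R (A B : Type) (rho : A -> B -> Prop) (x y : A + B) : Prop :=
  match x, y with
  | inl s, inr b => rho s b
  | inr _, inr _ => True
  | _, _ => False
  end.

Definition galaxy (A B : Type) (rho : A -> B -> Prop) : frame :=
  Frame (A + B) (galaxy_R A B rho).

Definition at_least_4 (T : Type) : Prop :=
  exists x1 x2 x3 x4 : T,
    x1 <> x2 /\ x1 <> x3 /\ x1 <> x4 /\ x2 <> x3 /\ x2 <> x4 /\ x3 <> x4.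

Definition has_exactly_2 {B : Type} (P : B -> Prop) : Prop :=
  exists b1 b2 : B, b1 <> b2 /\ forall b, P b <-> (b = b1 \/ b = b2).

Definition in_K2 (A B : Type) (rho : A -> B -> Prop) : Prop :=
  at_least_4 A /\ at_least_4 B /\ forall s, has_exactly_2 (rho s).

(** Flowers F_m^n, m >= 1, n in N^- = {-1,0,1,...} (n : Z).
    n >= 0: universe {0..m+n}, relation ({0} x {1..m}) u {1..m+n}^2.
    n = -1: universe {1..m}, relation {1..m}^2. *)
Definition flower_pt (m : nat) (n : Z) (k : nat) : Prop :=
  if (n <? 0)%Z then 1 <= k <= m else k <= m + Z.to_nat n.

Definition flower_rel (m : nat) (n : Z) (k l : nat) : Prop :=
  if (n <? 0)%Z then (1 <= k <= m /\ 1 <= l <= m)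
  else (k = 0 /\ 1 <= l <= m) \/
       (1 <= k <= m + Z.to_nat n /\ 1 <= l <= m + Z.to_nat n).

Definition flower (m : nat) (n : Z) : frame :=
  Frame {k : nat | flower_pt m n k}
        (fun x y => flower_rel m n (proj1_sig x) (proj1_sig y)).

Definition S_L (L : logic) (m : nat) (n : Z) : Prop :=
  1 <= m /\ (-1 <= n)%Z /\ logic_valid_in L (flower m n).

(* Main.v *)
Require Import Defs.
From Stdlib Require Import ZArith.
From Stdlib Require Import Lia List Classical Arith.
Import ListNotations.

Fixpoint mv (a : form) : nat :=
  match a with
  | Var p => S p
  | Bot => 0
  | Neg b => mv b
  | Or b c => Nat.max (mv b) (mv c)
  | Box b => mv b
  end.

Definition eqv {A B : Type} (V : nat -> A + B -> Prop) (N : nat) (b b' : B) :=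
  forall p, p < N -> (V p (inr b) <-> V p (inr b')).

Lemma eqv_sym {A B} V N (b b' : B) : @eqv A B V N b b' -> eqv V N b' b.
Proof. unfold eqv; intros H p Hp; specialize (H p Hp); tauto. Qed.

Lemma eqv_trans {A B} V N (a b c : B) : @eqv A B V N a b -> eqv V N b c -> eqv V N a c.
Proof. unfold eqv; intros H1 H2 p Hp; specialize (H1 p Hp); specialize (H2 p Hp); tauto. Qed.

Lemma eqv_S {A B} V N (b x : B) : @eqv A B V N b x -> (V N (inr b) <-> V N (inr x)) ->
  eqv V (S N) b x.
Proof.
  unfold eqv; intros H1 H2 p Hp. destruct (Nat.eq_dec p N); [subst; auto|].
  apply H1; lia.
Qed.

Lemma eqv_sat A B rho V N : forall a, mv a <= N -> forall b b', @eqv A B V N b b' ->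
  (sat (galaxy A B rho) V (inr b) a <-> sat (galaxy A B rho) V (inr b') a).
Proof.
  induction a; simpl; intros Hm b b' He.
  - apply He; lia.
  - tauto.
  - rewrite (IHa Hm b b' He); tauto.
  - rewrite (IHa1 ltac:(lia) b b' He), (IHa2 ltac:(lia) b b' He); tauto.
  - split; intros Hb u Hu; destruct u; simpl in Hu; try contradiction; apply Hb; exact I.
Qed.

Lemma pair_lemma {A B} (V : nat -> A + B -> Prop) N (c : B) :
  exists x y, forall b, eqv V N b c -> eqv V (S N) b x \/ eqv V (S N) b y.
Proof.
  destruct (classic (exists x, eqv V N x c /\ V N (inr x))) as [[x [Hx1 Hx2]]|H1];
  destruct (classic (exists y, eqv V N y c /\ ~ V N (inr y))) as [[y [Hy1 Hy2]]|H2].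
  - exists x, y. intros b Hb. destruct (classic (V N (inr b))).
    + left. apply eqv_S; [eapply eqv_trans; [exact Hb| apply eqv_sym; exact Hx1]|tauto].
    + right. apply eqv_S; [eapply eqv_trans; [exact Hb| apply eqv_sym; exact Hy1]|tauto].
  - exists x, x. intros b Hb. left. apply eqv_S; [eapply eqv_trans; [exact Hb| apply eqv_sym; exact Hx1]|].
    destruct (classic (V N (inr b))); [tauto|]. exfalso; apply H2; eauto.
  - exists y, y. intros b Hb. left. apply eqv_S; [eapply eqv_trans; [exact Hb| apply eqv_sym; exact Hy1]|].
    destruct (classic (V N (inr b))); [|tauto]. exfalso; apply H1; eauto.
  - exists c, c. intros b Hb. exfalso. destruct (classic (V N (inr b))); [apply H1|apply H2]; eauto.
Qed.

Lemma cover_exists A B (V : nat -> A + B -> Prop) (b0 : B) : forall N,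
  exists l : list B, forall b, exists b', In b' l /\ eqv V N b b'.
Proof.
  induction N.
  - exists [b0]. intros b. exists b0. split; [left; auto|]. intros p Hp; lia.
  - destruct IHN as [l Hl].
    assert (Hg : forall l0, exists l', forall b, (exists b', In b' l0 /\ eqv V N b b') ->
              exists b', In b' l' /\ eqv V (S N) b b').
    { induction l0 as [|c l0 IH].
      - exists []. intros b [b' [[] _]].
      - destruct IH as [l' H']. destruct (pair_lemma V N c) as [x [y Hxy]].
        exists (x :: y :: l'). intros b [b' [[<-|Hin] He]].
        + destruct (Hxy b He) as [E|E]; [exists x|exists y]; simpl; auto.
        + destruct (H' b (ex_intro _ b' (conj Hin He))) as [z [Hz1 Hz2]].
          exists z; simpl; auto. }
    destruct (Hg l) as [l' Hl']. exists l'. intros b. apply Hl'. apply Hl.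
Qed.

Lemma fpt m k : flower_pt 2 (Z.of_nat m) k <-> k <= 2 + m.
Proof.
  unfold flower_pt. case_eq (Z.of_nat m <? 0)%Z; intro E.
  - rewrite Z.ltb_lt in E; lia.
  - rewrite Nat2Z.id. tauto.
Qed.

Lemma frel m k l : flower_rel 2 (Z.of_nat m) k l <->
  (k = 0 /\ 1 <= l <= 2) \/ (1 <= k <= 2 + m /\ 1 <= l <= 2 + m).
Proof.
  unfold flower_rel. case_eq (Z.of_nat m <? 0)%Z; intro E.
  - rewrite Z.ltb_lt in E; lia.
  - rewrite Nat2Z.id. tauto.
Qed.

Definition gmap {A B : Type} (s : A) (l : list B) (d : B) (k : nat) : A + B :=
  match k with 0 => inl s | S j => inr (nth j l d) end.

Lemma truth A B rho V (s : A) (b1 b2 : B) (l0 : list B) N :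
  (forall b, rho s b <-> b = b1 \/ b = b2) ->
  (forall b, exists b', In b' (b1 :: b2 :: l0) /\ eqv V N b b') ->
  forall a, mv a <= N -> forall x : fW (flower 2 (Z.of_nat (length l0))),
  sat (flower 2 (Z.of_nat (length l0)))
      (fun p x => V p (gmap s (b1 :: b2 :: l0) b1 (proj1_sig x))) x a <->
  sat (galaxy A B rho) V (gmap s (b1 :: b2 :: l0) b1 (proj1_sig x)) a.
Proof.
  intros Hrho Hcov.
  induction a; simpl; intros Hm x.
  - tauto.
  - tauto.
  - rewrite (IHa Hm x); tauto.
  - rewrite (IHa1 ltac:(lia) x), (IHa2 ltac:(lia) x); tauto.
  - split.
    + intros H u Hu. destruct x as [k Hk]; simpl in H, Hu |- *. destruct k as [|k].
      * destruct u as [a'|b]; simpl in Hu; [contradiction|].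
        apply Hrho in Hu. destruct Hu as [-> | ->].
        -- assert (P : flower_pt 2 (Z.of_nat (length l0)) 1) by (apply fpt; lia).
           apply (proj1 (IHa Hm (exist _ 1 P))). apply H. simpl. apply frel. lia.
        -- assert (P : flower_pt 2 (Z.of_nat (length l0)) 2) by (apply fpt; lia).
           apply (proj1 (IHa Hm (exist _ 2 P))). apply H. simpl. apply frel. lia.
      * destruct u as [a'|b]; simpl in Hu; [contradiction|].
        destruct (Hcov b) as [b' [Hin He]].
        destruct (In_nth (b1 :: b2 :: l0) b' b1 Hin) as [j [Hj Hn]].
        simpl in Hj.
        assert (P : flower_pt 2 (Z.of_nat (length l0)) (S j)) by (apply fpt; lia).
        apply (eqv_sat A B rho V N a Hm b b' He). rewrite <- Hn.
        apply (proj1 (IHa Hm (exist _ (S j) P))). apply H. simpl. apply frel.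
        apply fpt in Hk. lia.
    + intros H y Hy. destruct x as [k Hk], y as [j Hj]; simpl in *.
      apply (proj2 (IHa Hm _)). simpl. apply H.
      apply frel in Hy.
      destruct k as [|k]; destruct j as [|j]; simpl; try (exfalso; lia).
      * destruct j as [|[|j]]; try (exfalso; lia); simpl; apply Hrho; auto.
      * exact I.
Qed.

Theorem lemma36 (L : logic) (A B : Type) (rho : A -> B -> Prop) :
  euclidean_logic L ->
  in_K2 A B rho ->
  (forall n : Z, (-1 <= n)%Z -> S_L L 2 n) ->
  logic_valid_in L (galaxy A B rho).
Proof.
  intros _ [HA [HB Hrho]] HS phi Hphi V w.
  destruct HA as [s0 _]. destruct HB as [c0 _].
  set (N := mv phi).
  destruct (cover_exists A B V c0 N) as [l0 Hl0].
  assert (Hval : forall s b1 b2, (forall b, rho s b <-> b = b1 \/ b = b2) ->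
     forall x : fW (flower 2 (Z.of_nat (length l0))),
     sat (galaxy A B rho) V (gmap s (b1 :: b2 :: l0) b1 (proj1_sig x)) phi).
  { intros s b1 b2 Hr x.
    assert (Hc : forall b, exists b', In b' (b1 :: b2 :: l0) /\ eqv V N b b').
    { intros b. destruct (Hl0 b) as [b' [H1 H2]]. exists b'; simpl; auto. }
    apply (proj1 (truth A B rho V s b1 b2 l0 N Hr Hc phi (le_n _) x)).
    destruct (HS (Z.of_nat (length l0)) ltac:(lia)) as [_ [_ Hv]].
    apply Hv; exact Hphi. }
  destruct w as [s|b].
  - destruct (Hrho s) as [b1 [b2 [_ Hr]]].
    assert (P : flower_pt 2 (Z.of_nat (length l0)) 0) by (apply fpt; lia).
    exact (Hval s b1 b2 Hr (exist _ 0 P)).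
  - destruct (Hrho s0) as [b1 [b2 [_ Hr]]].
    destruct (Hl0 b) as [b' [Hin He]].
    assert (Hin' : In b' (b1 :: b2 :: l0)) by (simpl; auto).
    destruct (In_nth _ _ b1 Hin') as [j [Hj Hn]]. simpl in Hj.
    assert (P : flower_pt 2 (Z.of_nat (length l0)) (S j)) by (apply fpt; lia).
    apply (eqv_sat A B rho V N phi (le_n _) b b' He). rewrite <- Hn.
    exact (Hval s0 b1 b2 Hr (exist _ (S j) P)).
Qed.
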